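(* For every definable relation $R(\bar x,\bar y)$, with $\bar x$ of length $k$ and $\bar y=(y_1,\dots,y_l)$, there is a natural number $K$ such that for every $\bar a\in\mathcal M^k$ the following are equivalent: (1) $R(\bar a,\bar b)$ holds for some linearly independent tuple $\bar b\in\mathcal M^l$ with $\mathcal V(\bar a)\cap\mathcal V(\bar b)=\{\vec 0\}$; (2) $R(\bar a,\bar b)$ holds for every linearly independent tuple $\bar b\in\mathcal M^l$ with $\mathcal V(\bar a)\cap\mathcal V(\bar b)=\{\vec 0\}$; (3) $(\exists_{>K}\bar y)R(\bar a,\bar y)$.
   Context: $\mathcal M$ denotes the $\mathbb Q$-vector space $\mathbb Q^{<\omega}$ of all sequences of rationals with only finitely many nonzero terms, with zero vector $\vec 0$, regarded as the structure $\langle\mathcal M;+\rangle$. A relation on $\mathcal M$ is definable if it is first-order definable without parameters in $\langle\mathcal M;+\rangle$. $\mathcal V(\bar a)$ denotes the $\mathbb Q$-linear span of the entries of $\bar a$. The quantifier $(\exists_{>K}y)Q(y)$ means ''there are at least $K+1$ pairwise distinct $y$ with $Q(y)$''; for tuples, $(\exists_{>K}y_1,\dots,y_l)Q(\bar y):=(\exists_{>K}y_1)(\exists_{>K}y_2,\dots,y_l)Q(\bar y)$. *)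

(* Defs.v *)
From HB Require Import structures.
From mathcomp Require Import all_boot all_order all_algebra.
Set Implicit Arguments. Unset Strict Implicit. Unset Printing Implicit Defensive.
Import Order.TTheory GRing.Theory Num.Theory.
Local Open Scope ring_scope.

(* The carrier M = Q^{<omega}: sequences of rationals with finitely many
   nonzero terms.  We represent such a sequence (q_0, q_1, ...) by the
   polynomial with coefficient sequence p`_i = q_i; {poly rat} is exactly
   the set of finitely supported rational sequences, with pointwise
   addition, zero vector 0 and pointwise rational scaling. *)
Definition M : Type := {poly rat}.

Inductive term : Type :=
| TVar : nat -> term
| TAdd : term -> term -> term.

Inductive formula : Type :=
| FEq  : term -> term -> formula
| FNot : formula -> formula
| FAnd : formula -> formula -> formula
| FOr  : formula -> formula -> formula
| FEx  : nat -> formula -> formula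
| FAll : nat -> formula -> formula.

Fixpoint eval_term (e : nat -> M) (t : term) : M :=
  match t with
  | TVar i => e i
  | TAdd t1 t2 => eval_term e t1 + eval_term e t2
  end.

Definition upd (e : nat -> M) (i : nat) (v : M) : nat -> M :=
  fun m => if m == i then v else e m.

Fixpoint sat (e : nat -> M) (f : formula) : Prop :=
  match f with
  | FEq t1 t2 => eval_term e t1 = eval_term e t2
  | FNot g => ~ sat e g
  | FAnd g h => sat e g /\ sat e h
  | FOr g h => sat e g \/ sat e h
  | FEx i g => exists v : M, sat (upd e i v) g
  | FAll i g => forall v : M, sat (upd e i v) g
  end.

Definition definable (k l : nat) (R : ('I_k -> M) -> ('I_l -> M) -> Prop) :
  Prop :=
  exists phi : formula, forall e : nat -> M,
    R (fun i : 'I_k => e i) (fun j : 'I_l => e (k + j)%N) <-> sat e phi.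

Definition in_span (n : nat) (a : 'I_n -> M) (v : M) : Prop :=
  exists c : 'I_n -> rat, v = \sum_(i < n) c i *: a i.

Definition lin_indep (n : nat) (b : 'I_n -> M) : Prop :=
  forall c : 'I_n -> rat, \sum_(i < n) c i *: b i = 0 -> forall i, c i = 0.

Definition trivial_meet (k l : nat) (a : 'I_k -> M) (b : 'I_l -> M) : Prop :=
  forall v : M, in_span a v -> in_span b v -> v = 0.

Definition exists_gt1 (K : nat) (P : M -> Prop) : Prop :=
  exists s : seq M, size s = K.+1 /\ uniq s /\ forall y, y \in s -> P y.

Fixpoint exists_gt (K l : nat) (Q : seq M -> Prop) : Prop :=
  match l with
  | 0 => Q [::]
  | l'.+1 => exists_gt1 K (fun y => exists_gt K l' (fun ys => Q (y :: ys)))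
  end.

(* Main.v *)
Require Import Defs.
From HB Require Import structures.
From mathcomp Require Import all_boot all_order all_algebra.
From mathcomp Require Import zify.
From Stdlib Require Import Classical FunctionalExtensionality.
Import Order.TTheory GRing.Theory Num.Theory.
Local Open Scope ring_scope.

Definition S (B : nat) (e : nat -> M) (f : nat -> int) : M :=
  \sum_(0 <= i < B) e i *~ f i.
Definition bnd (N : nat) (f : nat -> int) := forall i, `|f i| <= N%:Z.
Definition E B N (e e' : nat -> M) :=
  forall f, bnd N f -> (S B e f = 0 <-> S B e' f = 0).

Lemma sum_delta (B j : nat) (F : nat -> M) : (j < B)%N ->
  \sum_(0 <= i < B) F i *+ (i == j) = F j.
Proof.
elim: B => // B IH; rewrite ltnS leq_eqVlt => /orP [/eqP ->|hj].
  rewrite big_nat_recr //= eqxx mulr1n big1_seq ?add0r //.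
  move=> i; rewrite mem_index_iota => /andP [_ hi].
  by rewrite (ltn_eqF hi) mulr0n.
rewrite big_nat_recr //= IH // (gtn_eqF hj) mulr0n addr0 //.
Qed.

Fixpoint cnt (t : term) (i : nat) : nat :=
  match t with TVar j => nat_of_bool (i == j) | TAdd a b => (cnt a i + cnt b i)%N end.
Fixpoint tsz (t : term) : nat :=
  match t with TVar _ => 1%N | TAdd a b => (tsz a + tsz b)%N end.
Fixpoint tvb (t : term) : nat :=
  match t with TVar j => j.+1 | TAdd a b => maxn (tvb a) (tvb b) end.

Lemma eval_cnt B e t : (tvb t <= B)%N ->
  eval_term e t = \sum_(0 <= i < B) e i *+ cnt t i.
Proof.
elim: t => [j|a IHa b IHb] /=.
  by move=> h; rewrite sum_delta.
rewrite geq_max => /andP [ha hb]; rewrite IHa // IHb // -big_split /=.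
by apply: eq_bigr => i _; rewrite mulrnDr.
Qed.

Lemma cnt_le t i : (cnt t i <= tsz t)%N.
Proof. elim: t => [j|a IHa b IHb] /=; first by case: (i == j). by apply: leq_add. Qed.

Lemma S_eq B e f g : (forall i, (i < B)%N -> f i = g i) -> S B e f = S B e g.
Proof.
move=> h; apply: eq_big_seq => i; rewrite mem_index_iota => /andP [_ hi].
by rewrite h.
Qed.

Lemma mulrz_eq0M (v : M) (z : int) : (v *~ z == 0) = (z == 0) || (v == 0).
Proof. by rewrite -scaler_int scaler_eq0 intr_eq0. Qed.

Definition zat (i : nat) (g : nat -> int) (j : nat) : int := if j == i then 0 else g j.

Lemma S_upd B e i x g : (i < B)%N ->
  S B (upd e i x) g = S B e (zat i g) + x *~ g i.
Proof.
move=> hi; rewrite /S -(@sum_delta B i (fun j => x *~ g j) hi) -big_split /=.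
apply: eq_bigr => j _; rewrite /upd /zat; case: eqP => [->|_].
  by rewrite mulr1n mulr0z add0r.
by rewrite mulr0n addr0.
Qed.

Lemma S_comb B e u v (a b : int) :
  S B e (fun j => u j * a - v j * b) = S B e u *~ a - S B e v *~ b.
Proof.
rewrite /S !mulrz_suml -sumrB; apply: eq_bigr => j _.
by rewrite mulrzBr !mulrzA.
Qed.

Lemma E_sym B N e e' : E B N e e' -> E B N e' e.
Proof. by move=> h f hf; split => /(h f hf). Qed.

Lemma E_mono B N N' e e' : (N <= N')%N -> E B N' e e' -> E B N e e'.
Proof.
move=> hN h f hf; apply: h => i; apply: le_trans (hf i) _; by rewrite lez_nat.
Qed.

Lemma bnd_zat n i g : bnd n g -> bnd n (zat i g).
Proof. by move=> h j; rewrite /zat; case: eqP => // _; rewrite normr0. Qed.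

Lemma back B n e e' i : (i < B)%N -> E B (2*n*n + n) e e' ->
  forall x, exists y, E B n (upd e i x) (upd e' i y).
Proof.
move=> hi hE x.
case: (classic (exists f, [/\ bnd n f, f i != 0 & S B (upd e i x) f = 0]))
   => [[f [bf fi0 hf]] | hno].
- set f0 := zat i f.
  have fr0 : (f i)%:~R != 0 :> rat by rewrite intr_eq0.
  exists (- ((f i)%:~R)^-1 *: S B e' f0).
  have key : forall (e1 : nat -> M) x1 g, S B e1 f0 = - (x1 *~ f i) ->
      S B e1 (fun j => zat i g j * f i - f0 j * g i) = S B (upd e1 i x1) g *~ f i.
    move=> e1 x1 g h1; rewrite S_comb h1 S_upd // mulrzDl_tmp.
    by rewrite mulNrz opprK -!mulrzA mulrC.
  have hx : S B e f0 = - (x *~ f i).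
    by apply/eqP; rewrite -addr_eq0 -S_upd // hf.
  have hy : S B e' f0 = - ((- ((f i)%:~R)^-1 *: S B e' f0) *~ f i).
    by rewrite -scaler_int scalerA mulrN mulfV // scaleN1r opprK.
  move=> g bg.
  have bh : bnd (2*n*n+n) (fun j => zat i g j * f i - f0 j * g i).
    move=> j; have := bnd_zat _ i _ bg j; have := bnd_zat _ i _ bf j.
    have := bg i; have := bf i; rewrite /f0; nia.
  have fi00 : f i != 0 by [].
  split=> h.
  + have : S B (upd e i x) g *~ f i = 0 by rewrite h mul0rz.
    rewrite -(key _ _ _ hx) => /(hE _ bh); rewrite (key _ _ _ hy) => /eqP.
    by rewrite mulrz_eq0M (negbTE fi00) => /eqP.
  + have : S B (upd e' i (- ((f i)%:~R)^-1 *: S B e' f0)) g *~ f i = 0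
      by rewrite h mul0rz.
    rewrite -(key _ _ _ hy) => /(hE _ bh); rewrite (key _ _ _ hx) => /eqP.
    by rewrite mulrz_eq0M (negbTE fi00) => /eqP.
- pose D := (\max_(j < B) size (e' j))%N.
  exists 'X^D => g bg.
  have bg0 : bnd (2*n*n+n) (zat i g).
    move=> j; apply: le_trans (bnd_zat _ i _ bg j) _; rewrite lez_nat; nia.
  rewrite !S_upd //.
  have [gi0|gi0] := eqVneq (g i) 0.
    by rewrite gi0 !mulr0z !addr0; apply: hE.
  split=> h.
    exfalso; apply: hno; exists g; split=> //; by rewrite S_upd.
  exfalso; move: h => /(congr1 (fun p : M => p`_D)).
  rewrite coefD coefMrz coefXn eqxx coef0 /S coef_sum big1_seq ?add0r.
    move=> h0; have : (1 : rat) *~ g i == 0 by rewrite h0.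
    by rewrite intr_eq0 (negbTE gi0).
  move=> j /andP [_]; rewrite mem_index_iota => /andP [_ hj].
  rewrite coefMrz nth_default ?mul0rz //.
  by have := @leq_bigmax _ (fun j0 : 'I_B => size (e' j0)) (Ordinal hj).
Qed.

Fixpoint fvb (f : formula) : nat :=
  match f with
  | FEq t1 t2 => maxn (tvb t1) (tvb t2)
  | FNot g => fvb g
  | FAnd g h | FOr g h => maxn (fvb g) (fvb h)
  | FEx i g | FAll i g => maxn i.+1 (fvb g)
  end.

Fixpoint Nf (f : formula) : nat :=
  match f with
  | FEq t1 t2 => (tsz t1 + tsz t2)%N
  | FNot g => Nf g
  | FAnd g h | FOr g h => maxn (Nf g) (Nf h)
  | FEx _ g | FAll _ g => (2 * Nf g * Nf g + Nf g)%N
  end.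

Arguments back {B n e e' i}.
Arguments E_sym {B N e e'}.
Arguments E_mono {B N N' e e'}.

Lemma sat_E B (phi : formula) : (fvb phi <= B)%N ->
  forall e e', E B (Nf phi) e e' -> (sat e phi <-> sat e' phi).
Proof.
elim: phi => [t1 t2|g IH|g IHg h IHh|g IHg h IHh|i g IH|i g IH] /=.
- rewrite geq_max => /andP [h1 h2] e e' hE.
  pose f := fun j => (cnt t1 j)%:Z - (cnt t2 j)%:Z.
  have hS : forall e0, (eval_term e0 t1 = eval_term e0 t2) <-> S B e0 f = 0.
    move=> e0; rewrite (eval_cnt _ e0 _ h1) (eval_cnt _ e0 _ h2).
    have -> : S B e0 f = \sum_(0 <= i < B) e0 i *+ cnt t1 i
                        - \sum_(0 <= i < B) e0 i *+ cnt t2 i.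
      rewrite /S -sumrB; apply: eq_bigr => j _.
      by rewrite /f mulrzBr -!natz !mulrz_nat.
    by split => [->|/eqP]; [rewrite subrr | rewrite subr_eq0 => /eqP].
  rewrite !hS; apply: hE => j; have := cnt_le t1 j; have := cnt_le t2 j.
  rewrite /f; lia.
- move=> hB e e' hE; rewrite (IH hB e e' hE) //.
- rewrite geq_max => /andP [hg hh] e e' hE.
  rewrite (IHg hg e e') ?(IHh hh e e') //; apply: E_mono hE;
  by rewrite ?leq_maxl ?leq_maxr.
- rewrite geq_max => /andP [hg hh] e e' hE.
  rewrite (IHg hg e e') ?(IHh hh e e') //; apply: E_mono hE;
  by rewrite ?leq_maxl ?leq_maxr.
- rewrite geq_max => /andP [hi hg] e e' hE; split => [[v hv]|[v hv]].
    have [y hy] := back hi hE v; exists y; exact/(IH hg _ _ hy).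
  have [y hy] := back hi (E_sym hE) v; exists y; apply/(IH hg _ _ (E_sym hy)) => //.
- rewrite geq_max => /andP [hi hg] e e' hE; split => hv v.
    have [y hy] := back hi (E_sym hE) v; exact/(IH hg _ _ (E_sym hy)).
  have [y hy] := back hi hE v; exact/(IH hg _ _ hy).
Qed.

Definition ext (n : nat) (f : 'I_n -> M) (m : nat) : M :=
  if insub m is Some i then f i else 0.
Arguments ext {n}.

Lemma ext_ord n (f : 'I_n -> M) (i : 'I_n) : ext f i = f i.
Proof. by rewrite /ext valK. Qed.

Definition env (k l : nat) (a : 'I_k -> M) (bn : nat -> M) (m : nat) : M :=
  if (m < k)%N then ext a m else if (m < k + l)%N then bn (m - k)%N else 0.
Arguments env {k}.

Lemma R_sat k l (R : ('I_k -> M) -> ('I_l -> M) -> Prop) phi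
  (hphi : forall e : nat -> M,
    R (fun i : 'I_k => e i) (fun j : 'I_l => e (k + j)%N) <-> sat e phi)
  a (bn : nat -> M) : R a (fun j : 'I_l => bn j) <-> sat (env l a bn) phi.
Proof.
have h1 : (fun i : 'I_k => env l a bn i) = a.
  by apply: functional_extensionality => i; rewrite /env ltn_ord ext_ord.
have h2 : (fun j : 'I_l => env l a bn (k + j)%N) = (fun j : 'I_l => bn j).
  apply: functional_extensionality => j.
  by rewrite /env ltnNge leq_addr /= ltn_add2l ltn_ord addKn.
by have := hphi (env l a bn); rewrite h1 h2.
Qed.

Definition goodm B N k l (a : 'I_k -> M) bn m := forall f, bnd N f ->
  S B (env l a bn) f = 0 -> forall i, (k <= i < k + m)%N -> f i = 0.
Arguments goodm B N {k}.

Lemma good_S B N k l (a : 'I_k -> M) bn1 bn2 f :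
  goodm B N l a bn1 l -> bnd N f -> S B (env l a bn1) f = 0 ->
  S B (env l a bn2) f = 0.
Proof.
move=> hg hf h0; rewrite -h0; apply: eq_bigr => i _.
have hz := hg f hf h0 i; rewrite /env.
case: ltnP => // hk; case: ltnP => // hl.
by rewrite hz ?hk ?hl // !mulr0z.
Qed.

Lemma good_E B N k l (a : 'I_k -> M) bn1 bn2 :
  goodm B N l a bn1 l -> goodm B N l a bn2 l ->
  E B N (env l a bn1) (env l a bn2).
Proof. by move=> h1 h2 f hf; split; [apply: (@good_S _ _ _ _ _ _ _ _ h1 hf) | apply: (@good_S _ _ _ _ _ _ _ _ h2 hf)]. Qed.

Lemma generic_good B N k l (a : 'I_k -> M) (b : 'I_l -> M) :
  (k + l <= B)%N -> lin_indep b -> trivial_meet a b ->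
  goodm B N l a (ext b) l.
Proof.
move=> hB hb hm f _ h0.
have e1 : S B (env l a (ext b)) f =
   \sum_(i < k) a i *~ f i + \sum_(j < l) b j *~ f (j + k)%N.
  have hkB : (k <= B)%N by apply: leq_trans hB; apply: leq_addr.
  rewrite /S (@big_cat_nat _ _ _ k 0 B _ _ (leq0n k) hkB) /=.
  rewrite (@big_cat_nat _ _ _ (k+l) k B _ _ (leq_addr l k) hB) /=.
  rewrite [X in _ + (_ + X)]big1_seq ?addr0; last first.
    move=> i /andP [_]; rewrite mem_index_iota => /andP [hi _].
    by rewrite /env ltnNge (leq_trans (leq_addr l k) hi) /= ltnNge hi mul0rz.
  congr (_ + _).
    rewrite big_mkord; apply: eq_bigr => i _; by rewrite /env ltn_ord ext_ord.
  rewrite -{1}(add0n k) big_addn addKn big_mkord; apply: eq_bigr => j _.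
  rewrite /env ltnNge leq_addl /= addnC ltn_add2l ltn_ord addKn.
  by rewrite (@ext_ord l b j).
move: h0; rewrite e1 => /eqP; rewrite addr_eq0 => /eqP hv.
have hv2 : \sum_(j < l) b j *~ f (j + k)%N = - \sum_(i < k) a i *~ f i.
  by rewrite hv opprK.
have hv0 : \sum_(j < l) b j *~ f (j + k)%N = 0.
  apply: hm.
    exists (fun i => - (f i)%:~R); rewrite hv2 -sumrN; apply: eq_bigr => i _.
    by rewrite scaleNr scaler_int.
  by exists (fun j : 'I_l => (f (j + k)%N)%:~R); apply: eq_bigr => j _; rewrite scaler_int.
have hc := hb (fun j : 'I_l => (f (j + k)%N)%:~R).
move=> i /andP [hki hil].
have hj : (i - k < l)%N by rewrite ltn_subLR.
have hz : (f (i - k + k)%N)%:~R == 0 :> rat.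
  apply/eqP; apply: (hc _ (Ordinal hj)).
  apply: etrans hv0; apply: eq_bigr => j _; by rewrite scaler_int.
by move: hz; rewrite intr_eq0 subnK // => /eqP.
Qed.

Lemma coef_mono l (ns : seq nat) (c : 'I_l -> rat) (j0 : 'I_l) :
  uniq ns -> size ns = l ->
  (\sum_(j < l) c j *: ('X^(nth 0%N ns j) : M))`_(nth 0%N ns j0) = c j0.
Proof.
move=> hu hs; rewrite coef_sum (bigD1 j0) //= coefZ coefXn eqxx mulr1.
rewrite big1 ?addr0 // => j hj; rewrite coefZ coefXn nth_uniq ?hs ?ltn_ord //.
by rewrite eq_sym (negbTE (hj : (j : nat) != j0)) mulr0.

Qed.

Lemma span_coef k (a : 'I_k -> M) D v m :
  (forall i, (size (a i) <= D)%N) -> (D <= m)%N -> in_span a v -> v`_m = 0.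
Proof.
move=> ha hm [c ->]; rewrite coef_sum big1 // => i _.
by rewrite coefZ nth_default ?mulr0 // (leq_trans (ha i) hm).
Qed.

Lemma mono_generic k l (a : 'I_k -> M) (ns : seq nat) D :
  (forall i, (size (a i) <= D)%N) -> uniq ns -> size ns = l ->
  all (fun n => D <= n)%N ns ->
  lin_indep (fun j : 'I_l => ('X^(nth 0%N ns j) : M)) /\
  trivial_meet a (fun j : 'I_l => ('X^(nth 0%N ns j) : M)).
Proof.
move=> ha hu hs hall; split.
  move=> c h j0; have := congr1 (fun p : M => p`_(nth 0%N ns j0)) h.
  by rewrite /= coef_mono // coef0.
move=> v hva [c hv].
have hc : forall j, c j = 0.
  move=> j; rewrite -(@coef_mono l ns c j hu hs) -hv.
  apply: (@span_coef _ _ D _ _ ha _ hva); apply: (allP hall); by rewrite mem_nth ?hs.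
by rewrite hv big1 // => j _; rewrite hc scale0r.
Qed.

Lemma egt_intro K l : forall D (Q : seq M -> Prop),
  (forall ns : seq nat, size ns = l -> uniq ns -> all (fun n => D <= n)%N ns ->
     Q (map (fun n => 'X^n) ns)) -> exists_gt K l Q.
Proof.
elim: l => [|l IH] D Q H /=; first by apply: (H [::]).
exists (map (fun i => 'X^(D + i)) (iota 0 K.+1)); split; first by rewrite size_map size_iota.
split.
  rewrite map_inj_uniq ?iota_uniq // => m n /(congr1 (fun p : M => size p)).
  by rewrite !size_polyXn => -[/eqP]; rewrite eqn_add2l => /eqP.
move=> y /mapP [m hm ->]; apply: (IH (D + K.+1)%N) => ns hs hu hal.
move: hm; rewrite mem_iota add0n => hm.
apply: (H ((D + m)%N :: ns)); rewrite /= ?hs //.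
  rewrite hu andbT; apply/negP => hin; have := allP hal _ hin; lia.
rewrite leq_addr /=; apply/allP => n hn; have := allP hal _ hn; lia.
Qed.

Lemma egt_elim K (Q P : seq M -> Prop) (bad : seq M -> seq M) L :
  (forall p, size (bad p) <= K)%N ->
  (forall p y, (size p < L)%N -> P p -> y \notin bad p -> P (rcons p y)) ->
  forall m p, (size p + m = L)%N -> P p -> exists_gt K m (fun ys => Q (p ++ ys)) ->
  exists ys, [/\ size ys = m, P (p ++ ys) & Q (p ++ ys)].
Proof.
move=> hb hst; elim => [|m IH] p hL hP /=.
  by move=> hQ; exists [::]; rewrite !cats0 in hQ *; split.
move=> [s [hs [hu hall]]].
have : ~~ all (fun y => y \in bad p) s.
  apply/negP => /allP hsub; have := uniq_leq_size hu hsub; rewrite hs.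
  have := hb p; move=> h1 h2; by have := leq_trans h2 h1; rewrite ltnn.
case/allPn => y hy hnb.
have [|||ys [h1 h2 h3]] := IH (rcons p y).
- by rewrite size_rcons addSnnS.
- apply: hst => //; lia.
- by have := hall y hy; rewrite (_ : (fun ys => Q (rcons p y ++ ys)) = fun ys => Q (p ++ y :: ys)) //;
    apply: functional_extensionality => ys; rewrite cat_rcons.
exists (y :: ys); rewrite -cat_rcons; split => //=; by rewrite h1.
Qed.

Definition cf N B (c : {ffun 'I_B -> 'I_(2*N).+1}) (m : nat) : int :=
  if (insub m : option 'I_B) is Some i then ((c i : nat)%:Z - N%:Z) else 0.
Arguments cf {N B}.

Lemma cf_onto N B f : bnd N f ->
  exists c : {ffun 'I_B -> 'I_(2*N).+1}, forall i, (i < B)%N -> cf c i = f i.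
Proof.
move=> hf; exists [ffun i : 'I_B => inord (absz (f i + N%:Z))] => i hi.
rewrite /cf insubT /= ffunE /= inordK /=; have := hf i; lia.
Qed.

Definition bad B N k l (a : 'I_k -> M) (p : seq M) : seq M :=
  [seq - ((cf c (k + size p)%N)%:~R)^-1 *: S B (env l a (nth 0 p)) (cf c)
  | c <- enum {ffun 'I_B -> 'I_(2*N).+1}].

Lemma size_bad B N k l a p : size (@bad B N k l a p) = #|{ffun 'I_B -> 'I_(2*N).+1}|.
Proof. by rewrite size_map cardE. Qed.

Lemma env_rcons k l (a : 'I_k -> M) p y m : (size p < l)%N ->
  env l a (nth 0 (rcons p y)) m = env l a (nth 0 p) m + y *+ (m == k + size p)%N.
Proof.
move=> hp; rewrite /env; case: ltnP => hk.
  by rewrite (_ : (m == k + size p)%N = false) ?addr0 //; apply/negbTE; lia.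
case: ltnP => hl.
  rewrite nth_rcons; case: ltnP => hs.
    by rewrite (_ : (m == k + size p)%N = false) ?addr0 //; apply/negbTE; lia.
  rewrite nth_default // add0r.
  have -> : (m - k == size p)%N = (m == k + size p)%N by apply/eqP/eqP; lia.
  by case: (m == k + size p)%N.
by rewrite (_ : (m == k + size p)%N = false) ?addr0 //; apply/negbTE; lia.
Qed.

Lemma S_rcons B k l (a : 'I_k -> M) p y f : (k + l <= B)%N -> (size p < l)%N ->
  S B (env l a (nth 0 (rcons p y))) f =
  S B (env l a (nth 0 p)) f + y *~ f (k + size p)%N.
Proof.
move=> hB hp.
have hpos : (k + size p < B)%N by lia.
rewrite /S -(@sum_delta B (k + size p)%N (fun j => y *~ f j) hpos) -big_split /=.
apply: eq_bigr => m _; rewrite env_rcons // mulrzDl_tmp.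
by case: (m == k + size p)%N; rewrite ?mulr1n ?mulr0n ?mul0rz.
Qed.

Lemma step B N k l (a : 'I_k -> M) p y : (k + l <= B)%N -> (size p < l)%N ->
  goodm B N l a (nth 0 p) (size p) -> y \notin @bad B N k l a p ->
  goodm B N l a (nth 0 (rcons p y)) (size (rcons p y)).
Proof.
move=> hB hp hg hy f hf h0 i hi.
rewrite S_rcons // in h0.
have hpos : (k + size p < B)%N by lia.
have [fp0|fp0] := eqVneq (f (k + size p)%N) 0.
  move: h0; rewrite fp0 mulr0z addr0 => h0.
  have [->//|hne] := eqVneq i (k + size p)%N.
  apply: (hg f hf h0); move: hi hne; rewrite size_rcons; lia.
exfalso; move/negP: hy; apply.
have [c hc] := @cf_onto N B f hf.
apply/mapP; exists c; first by rewrite mem_enum.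
rewrite (@S_eq B _ _ _ hc) (hc _ hpos).
have -> : S B (env l a (nth 0 p)) f = - (y *~ f (k + size p)%N).
  by apply/eqP; rewrite -addr_eq0 h0.
rewrite -scaler_int scalerN scaleNr opprK scalerA mulVf ?scale1r //.
by rewrite intr_eq0.
Qed.

Theorem mainTheorem2 (k l : nat) (R : ('I_k -> M) -> ('I_l -> M) -> Prop)
  (hR : definable R) :
  exists K : nat, forall a : 'I_k -> M,
    ((exists b : 'I_l -> M, [/\ lin_indep b, trivial_meet a b & R a b]) <->
     (forall b : 'I_l -> M, lin_indep b -> trivial_meet a b -> R a b)) /\
    ((forall b : 'I_l -> M, lin_indep b -> trivial_meet a b -> R a b) <->
     exists_gt K l (fun ys => R a (fun j : 'I_l => nth 0 ys j))).
Proof.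
move: hR => [phi hphi].
pose B := (fvb phi + k + l)%N; pose N := Nf phi.
have hkl : (k + l <= B)%N by rewrite /B -addnA leq_addl.
have hfv : (fvb phi <= B)%N by rewrite /B -addnA leq_addr.
exists #|{ffun 'I_B -> 'I_(2*N).+1}| => a.
pose D := (\max_(i < k) size (a i))%N.
have hD : forall i, (size (a i) <= D)%N.
  by move=> i; have := @leq_bigmax _ (fun j : 'I_k => size (a j)) i.
have key : forall bn1 bn2 : nat -> M, goodm B N l a bn1 l -> goodm B N l a bn2 l ->
    (R a (fun j => bn1 j) <-> R a (fun j => bn2 j)).
  move=> bn1 bn2 g1 g2.
  rewrite (@R_sat k l R phi hphi a bn1) (@R_sat k l R phi hphi a bn2).
  exact: (@sat_E B phi hfv _ _ (@good_E B N k l a bn1 bn2 g1 g2)).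
have extE : forall b : 'I_l -> M, (fun j : 'I_l => ext b j) = b.
  by move=> b; apply: functional_extensionality => j; rewrite ext_ord.
have gen : forall b : 'I_l -> M, lin_indep b -> trivial_meet a b ->
    goodm B N l a (ext b) l.
  by move=> b; apply: generic_good.
have hall : all (fun n => D <= n)%N (iota D l).
  by apply/allP => n; rewrite mem_iota => /andP [].
pose b0 := fun j : 'I_l => ('X^(nth 0%N (iota D l) j) : M).
have [hb0i hb0m] : lin_indep b0 /\ trivial_meet a b0 := @mono_generic k l a (iota D l) D hD (iota_uniq D l)
   (size_iota D l) hall.
have one2 : (exists b : 'I_l -> M, [/\ lin_indep b, trivial_meet a b & R a b]) ->
    (forall b : 'I_l -> M, lin_indep b -> trivial_meet a b -> R a b).
  move=> [b1 [h1 h2 h3]] b hi hm.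
  have := key (ext b1) (ext b) (gen _ h1 h2) (gen _ hi hm).
  by rewrite !extE => -[+ _]; apply.
split; first split => //.
  by move=> H; exists b0; split => //; apply: H.
split => H.
  apply: (@egt_intro _ l D) => ns hs hu hal.
  have -> : (fun j : 'I_l => nth 0 (map (fun n => 'X^n) ns) j) =
            (fun j : 'I_l => ('X^(nth 0%N ns j) : M)).
    apply: functional_extensionality => j; by rewrite (nth_map 0%N) // hs ltn_ord.
  have [h1 h2] := @mono_generic k l a ns D hD hu hs hal.
  exact: H.
have hb : forall p, (size (@bad B N k l a p) <= #|{ffun 'I_B -> 'I_(2*N).+1}|)%N.
  by move=> p; rewrite size_bad.
have hst : forall p y, (size p < l)%N -> goodm B N l a (nth 0 p) (size p) ->
    y \notin @bad B N k l a p -> goodm B N l a (nth 0 (rcons p y)) (size (rcons p y)).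
  by move=> p y hp hP hy; apply: step.
have hP0 : goodm B N l a (nth 0 [::]) (size ([::] : seq M)).
  move=> f _ _ i /=; lia.
have [ys [h1 h2 h3]] := @egt_elim _ (fun ys => R a (fun j : 'I_l => nth 0 ys j))
   (fun p => goodm B N l a (nth 0 p) (size p)) (@bad B N k l a) l hb hst l [::] erefl hP0 H.
apply: one2; exists b0; split => //.
have hg1 : goodm B N l a (nth 0 ys) l by move: h2; rewrite h1.
have := key _ _ hg1 (gen b0 hb0i hb0m); rewrite extE => -[+ _]; apply; exact: h3.
Qed.
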